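(* Let $X,Y,P$ be Banach spaces, $F:X\times P\rightrightarrows Y$ and $G:X\rightrightarrows Y$ set-valued maps and $(\overline{x},\overline{p},\overline{y})\in X\times P\times Y$ with $\overline{y}\in F(\overline{x},\overline{p})$ and $-\overline{y}\in G(\overline{x})$. Let $S:P\rightrightarrows X$, $S(p)=\{x\in X: 0\in F(x,p)+G(x)\}$. Suppose: (i) $(F,G)$ is locally sum-stable around $(\overline{x},\overline{p},\overline{y},-\overline{y})$; (ii) for every $p$ in a neighborhood of $\overline{p}$, $\operatorname{Gr}F(\cdot,p)$ is closed; (iii) $\operatorname{Gr}G$ is closed; (iv) $F$ is Lipschitz-like around $((\overline{x},\overline{p}),\overline{y})$; (v) $G$ is metrically regular around $(\overline{x},-\overline{y})$; (vi) $G$ is inner semicontinuous at $(\overline{x},-\overline{y})$; (vii) $\widehat{\operatorname{lip}}_xF((\overline{x},\overline{p}),\overline{y})\cdot\operatorname{reg}G(\overline{x},-\overline{y})<1$. Then $S$ is Lipschitz-like around $(\overline{p},\overline{x})$ and \[ \operatorname{lip}S(\overline{p},\overline{x})\le\frac{\operatorname{reg}G(\overline{x},-\overline{y})\cdot\widehat{\operatorname{lip}}_pF((\overline{x},\overline{p}),\overline{y})}{1-\widehat{\operatorname{lip}}_xF((\overline{x},\overline{p}),\overline{y})\cdot\operatorname{reg}G(\overline{x},-\overline{y})}. \]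
   Context: $B$ open balls, $\mathbb{D}_Y$ closed unit ball, $d(x,A)=\inf_{a\in A}\|x-a\|$, $d(x,\emptyset)=\infty$; $X\times P$ carries the sum norm. Write $F_p=F(\cdot,p)$. $(F,G)$ is locally sum-stable around $(\overline{x},\overline{p},\overline{y},\overline{z})$ (where $\overline{y}\in F(\overline{x},\overline{p})$, $\overline{z}\in G(\overline{x})$) if for every $\varepsilon>0$ there is $\delta>0$ such that for every $(x,p)\in B(\overline{x},\delta)\times B(\overline{p},\delta)$ and every $w\in(F_p+G)(x)\cap B(\overline{y}+\overline{z},\delta)$ there exist $y\in F_p(x)\cap B(\overline{y},\varepsilon)$ and $z\in G(x)\cap B(\overline{z},\varepsilon)$ with $w=y+z$. A multifunction $T:A\rightrightarrows B$ is Lipschitz-like around $(\overline{a},\overline{b})\in\operatorname{Gr}T$ with constant $L>0$ if there are neighborhoods $U$ of $\overline{a}$, $V$ of $\overline{b}$ with $T(a)\cap V\subset T(u)+L\|a-u\|\mathbb{D}_B$ for all $a,u\in U$ ($\operatorname{lip}T(\overline{a},\overline{b})$ the infimum of such $L$); $T$ is metrically regular around $(\overline{a},\overline{b})$ with constant $L$ if there are neighborhoods $U,V$ with $d(a,T^{-1}(b))\le L\,d(b,T(a))$ for all $(a,b)\in U\times V$ ($\operatorname{reg}T(\overline{a},\overline{b})$ the infimum of such $L$); $T$ is inner semicontinuous at $(\overline{a},\overline{b})$ if for every open $D\ni\overline{b}$ there is a neighborhood $U$ of $\overline{a}$ with $T(a)\cap D\ne\emptyset$ for all $a\in U$. $\widehat{\operatorname{lip}}_xF((\overline{x},\overline{p}),\overline{y})$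 is the infimum of $L>0$ for which there are neighborhoods $U$ of $\overline{x}$, $V$ of $\overline{p}$, $W$ of $\overline{y}$ with $F(x,p)\cap W\subset F(u,p)+L\|x-u\|\mathbb{D}_Y$ for all $x,u\in U$, $p\in V$; $\widehat{\operatorname{lip}}_pF((\overline{x},\overline{p}),\overline{y})$ is the infimum of $L>0$ for which there are such neighborhoods with $F(x,p)\cap W\subset F(x,q)+L\|p-q\|\mathbb{D}_Y$ for all $x\in U$, $p,q\in V$. *)

(* Defs.v *)
From HB Require Import structures.
From mathcomp Require Import all_boot all_order all_algebra.
From mathcomp Require Import all_classical all_reals all_analysis.
Set Implicit Arguments. Unset Strict Implicit. Unset Printing Implicit Defensive.
Import Order.TTheory GRing.Theory Num.Theory.
Import numFieldNormedType.Exports.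
Local Open Scope classical_set_scope.
Local Open Scope ring_scope.

Section Defs.
Variable R : realType.

(* d(x,A) = inf_{a in A} |x - a|, with d(x, emptyset) = +oo *)
Definition dist (B : normedModType R) (x : B) (A : set B) : \bar R :=
  ereal_inf [set (`|x - a|)%:E | a in A].

Definition lipschitz_like (A : topologicalType) (B : normedModType R)
  (dA : A -> A -> R) (T : A -> set B) (a0 : A) (b0 : B) (L : R) : Prop :=
  exists U V, nbhs a0 U /\ nbhs b0 V /\
    forall a u, U a -> U u -> forall b, T a b -> V b ->
      exists2 b', T u b' & `|b - b'| <= L * dA a u.

Definition lip (A : topologicalType) (B : normedModType R)
  (dA : A -> A -> R) (T : A -> set B) (a0 : A) (b0 : B) : \bar R :=
  ereal_inf [set L%:E | L in [set L | 0 < L /\ lipschitz_like dA T a0 b0 L]].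

Definition metric_regular (A B : normedModType R) (T : A -> set B)
  (a0 : A) (b0 : B) (L : R) : Prop :=
  exists U V, nbhs a0 U /\ nbhs b0 V /\
    forall a b, U a -> V b ->
      (dist a [set a' | T a' b] <= L%:E * dist b (T a))%E.

Definition reg (A B : normedModType R) (T : A -> set B) (a0 : A) (b0 : B)
  : \bar R :=
  ereal_inf [set L%:E | L in [set L | 0 < L /\ metric_regular T a0 b0 L]].

Definition inner_semicontinuous (A B : topologicalType) (T : A -> set B)
  (a0 : A) (b0 : B) : Prop :=
  forall D, open D -> D b0 -> \forall a \near a0, T a `&` D !=set0.

Definition locally_sum_stable (X P Y : normedModType R)
  (F : X -> P -> set Y) (G : X -> set Y) (xb : X) (pb : P) (yb zb : Y) : Prop :=
  forall eps, 0 < eps -> exists2 delta, 0 < delta &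
    forall x p, ball xb delta x -> ball pb delta p ->
      forall w, [set y + z | y in F x p & z in G x] w ->
        ball (yb + zb) delta w ->
        exists y z, [/\ F x p y, ball yb eps y, G x z, ball zb eps z
                        & w = y + z].

Definition lip_hat_x (X P Y : normedModType R) (F : X -> P -> set Y)
  (xb : X) (pb : P) (yb : Y) : \bar R :=
  ereal_inf [set L%:E | L in [set L | 0 < L /\
    exists U V W, [/\ nbhs xb U, nbhs pb V, nbhs yb W &
      forall x u p, U x -> U u -> V p -> forall y, F x p y -> W y ->
        exists2 y', F u p y' & `|y - y'| <= L * `|x - u|]]].

Definition lip_hat_p (X P Y : normedModType R) (F : X -> P -> set Y)
  (xb : X) (pb : P) (yb : Y) : \bar R :=
  ereal_inf [set L%:E | L in [set L | 0 < L /\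
    exists U V W, [/\ nbhs xb U, nbhs pb V, nbhs yb W &
      forall x p q, U x -> V p -> V q -> forall y, F x p y -> W y ->
        exists2 y', F x q y' & `|y - y'| <= L * `|p - q|]]].

Definition sum_dist (X P : normedModType R) (a b : X * P) : R :=
  `|a.1 - b.1| + `|a.2 - b.2|.

Definition solution_map (X P Y : normedModType R) (F : X -> P -> set Y)
  (G : X -> set Y) (p : P) : set X :=
  [set x | exists y z, [/\ F x p y, G x z & y + z = 0]].

End Defs.

(* Main.v *)
Require Import Defs.
From HB Require Import structures.
From mathcomp Require Import all_boot all_order all_algebra.
From mathcomp Require Import all_classical all_reals all_analysis.
From mathcomp Require Import ring lra.
Import Order.TTheory GRing.Theory Num.Theory.
Import numFieldNormedType.Exports.
Local Open Scope classical_set_scope.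
Local Open Scope ring_scope.

Section Geo.
Context {R : realType} {V : completeNormedModType R}.

Lemma geo_tail (u : nat -> V) (D q : R) : 0 <= D -> 0 <= q -> q < 1 ->
  (forall k, `|u k - u k.+1| <= D * q ^+ k) ->
  forall n m, (1 - q) * `|u n - u (n + m)%N| <= D * q ^+ n * (1 - q ^+ m).
Proof.
move=> D0 q0 q1 Hs n; elim=> [|m IH].
  by rewrite addn0 subrr normr0 expr0 subrr !mulr0.
have h1 := ler_distD (u (n + m)%N) (u n) (u (n + m.+1)%N).
have h2 := Hs (n + m)%N; rewrite addnS in h1 *.
have qn0 : 0 <= q ^+ n by apply: exprn_ge0.
have qm0 : 0 <= q ^+ m by apply: exprn_ge0.
rewrite exprD in h2; rewrite exprS.
have : (1 - q) * `|u n - u (n + m).+1| <=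
   (1 - q) * (`|u n - u (n + m)%N| + `|u (n + m)%N - u (n + m).+1|).
  by apply: ler_wpM2l => //; lra.
have e0 : 0 <= D * q ^+ n by apply: mulr_ge0.
nra.
Qed.

Lemma geo_cvg (u : nat -> V) (D q : R) : 0 <= D -> 0 <= q -> q < 1 ->
  (forall k, `|u k - u k.+1| <= D * q ^+ k) -> cvgn u.
Proof.
move=> D0 q0 q1 Hs.
have tl := geo_tail u D q D0 q0 q1 Hs.
set C := (D + 1) / (1 - q).
have Cpos : 0 < C by apply: divr_gt0; lra.
have lt_min n m : `|u n - u m| <= C * q ^+ minn n m.
  have key : forall n m, (n <= m)%N -> `|u n - u m| <= C * q ^+ n.
    move=> a b ab; have := tl a (b - a)%N; rewrite subnKC //.
    have qa : 0 <= q ^+ a by apply: exprn_ge0.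
    have qb : 0 <= q ^+ (b - a) by apply: exprn_ge0.
    have e0 := mulr_ge0 D0 qa.
    move=> h; rewrite /C mulrAC ler_pdivlMr; last lra.
    rewrite mulrC; apply: (le_trans h).
    have : D * q ^+ a * (1 - q ^+ (b - a)) <= D * q ^+ a by nra.
    move=> h'; apply: (le_trans h'); nra.
  case/orP: (leq_total n m) => nm.
    by rewrite (minn_idPl nm); apply: key.
  by rewrite (minn_idPr nm) distrC; apply: key.
apply/cauchy_cvgP; apply/cauchy_ballP => _/posnumP[e]; near_simpl.
near=> n; rewrite -ball_normE /= (le_lt_trans (lt_min n.1 n.2)) //.
rewrite // -ltr_pdivlMl //.
suff : ball 0 (C^-1 * e%:num) (q ^+ minn n.1 n.2).
  by rewrite /ball /= sub0r normrN ger0_norm // exprn_ge0.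
near: n; rewrite nbhs_simpl.
pose g := fun w : nat * nat => q ^+ minn w.1 w.2.
have := @fcvg_ball _ _ (g @ filter_prod \oo \oo) _ 0 _ (C^-1 * e%:num).
move: (@cvg_geometric _ 1 q); rewrite ger0_norm // => /(_ q1) geo.
near_simpl; apply; last by rewrite mulr_gt0 // invr_gt0.
apply/cvg_ballP => _/posnumP[delta]; near_simpl.
have [N _ Q] : \forall N \near \oo, ball 0 delta%:num (geometric 1 q N).
  exact: (@fcvg_ball R R _ _ 0 geo).
exists ([set n | N <= n], [set n | N <= n])%N; first by split; exists N.
move=> [n m] [Nn Nm]; rewrite /ball /= sub0r normrN ger0_norm /g ?exprn_ge0 //.
apply: le_lt_trans; last by apply: (Q N) => /=.
rewrite sub0r normrN ger0_norm /geometric /= ?mul1r ?exprn_ge0 //.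
by rewrite ler_wiXn2l // ?ltW // leq_min Nn.
Unshelve. all: end_near. Qed.
End Geo.


Section Iter.
Context {R : realType} {X Y : completeNormedModType R}.
Variables (F' G : X -> set Y) (xb : X) (yb : Y) (rho lam mu mu' : R).
Hypotheses (Hlam0 : 0 < lam) (Hmu0 : 0 <= mu) (Hmumu : mu < mu')
  (Hth : lam * mu' < 1).
Hypothesis HL : forall x u, `|xb - x| < rho -> `|xb - u| < rho ->
  forall y, F' x y -> `|yb - y| < rho ->
  exists2 y', F' u y' & `|y - y'| <= lam * `|x - u|.
Hypothesis HM : forall a b, `|xb - a| < rho -> `|- yb - b| < rho ->
  (dist a [set a' | G a' b] <= mu%:E * dist b (G a))%E.
Hypothesis HcF : closed [set xy : X * Y | F' xy.1 xy.2].
Hypothesis HcG : closed [set xy : X * Y | G xy.1 xy.2].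

Lemma mr_step a c b : `|xb - a| < rho -> `|- yb - b| < rho -> G a c ->
  exists2 a', G a' b & `|a - a'| <= mu' * `|b - c|.
Proof.
move=> ha hb Gac.
have [->|bc] := eqVneq b c.
  by exists a => //; rewrite subrr normr0 subrr normr0 mulr0.
have t0 : 0 < `|b - c| by rewrite normr_gt0 subr_eq0.
have h1 : (dist b (G a) <= (`|b - c|)%:E)%E.
  by apply: ereal_inf_lbound; exists c.
have h2 : (dist a [set a' | G a' b] < (mu' * `|b - c|)%:E)%E.
  apply: (le_lt_trans (HM _ _ ha hb)).
  apply: (@le_lt_trans _ _ (mu%:E * (`|b - c|)%:E)%E).
    by apply: lee_wpmul2l => //; rewrite lee_fin.
  by rewrite -EFinM lte_fin ltr_pM2r.
have [_ [a' Ga' <-]] := ereal_inf_lt h2.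
by rewrite lte_fin => /ltW; exists a'.
Qed.


Lemma scaled_tri {V : normedModType R} (m : V) {c : R} {a b : V} : 0 <= c ->
  c * `|a - b| <= c * `|a - m| + c * `|m - b|.
Proof. by move=> c0; rewrite -mulrDr; apply: ler_wpM2l => //; apply: ler_distD. Qed.

Lemma iter_sol x0 y0 y0' : G x0 (- y0) -> F' x0 y0' ->
  (1 - lam * mu') * `|xb - x0| + mu' * `|y0 - y0'| < (1 - lam * mu') * rho ->
  (1 - lam * mu') * `|yb - y0| + `|y0 - y0'| < (1 - lam * mu') * rho ->
  exists x y, [/\ F' x y, G x (- y) &
     (1 - lam * mu') * `|x0 - x| <= mu' * `|y0 - y0'|].
Proof.
move=> G0 F0 hx0 hy0.
set th := lam * mu' in hx0 hy0 *.
set K := `|y0 - y0'| in hx0 hy0 *.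
have mu'0 : 0 < mu' by apply: le_lt_trans Hmumu.
have th0 : 0 < th by apply: mulr_gt0.
have c0 : 0 < 1 - th by rewrite subr_gt0.
have K0 : 0 <= K by rewrite /K normr_ge0.
have g1 : forall s : X * Y * Y, exists x1,
    (`|xb - s.1.1| < rho /\ `|- yb - - s.2| < rho /\ G s.1.1 (- s.1.2)) ->
    G x1 (- s.2) /\ `|s.1.1 - x1| <= mu' * `|s.1.2 - s.2|.
  move=> s; have [[h1 [h2 h3]]|hn] := pselect
    (`|xb - s.1.1| < rho /\ `|- yb - - s.2| < rho /\ G s.1.1 (- s.1.2)).
    have [a' Ga' ha'] := mr_step _ _ _ h1 h2 h3.
    exists a' => _; split => //.
    have e : - s.2 - - s.1.2 = s.1.2 - s.2 by rewrite opprK addrC.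
    by rewrite -e.
  by exists s.1.1.
have g2 : forall s : X * X * Y, exists y'',
    (`|xb - s.1.1| < rho /\ `|xb - s.1.2| < rho /\ F' s.1.1 s.2 /\
       `|yb - s.2| < rho) ->
    F' s.1.2 y'' /\ `|s.2 - y''| <= lam * `|s.1.1 - s.1.2|.
  move=> s; have [[h1 [h2 [h3 h4]]]|hn] := pselect
    (`|xb - s.1.1| < rho /\ `|xb - s.1.2| < rho /\ F' s.1.1 s.2 /\
       `|yb - s.2| < rho).
    have [y'' Fy hy] := HL _ _ h1 h2 _ h3 h4.
    by exists y''.
  by exists s.2.
have [h1 Hh1] := choice g1.
have [h2 Hh2] := choice g2.
pose f (s : X * Y * Y) := (h1 s, s.2, h2 (s.1.1, h1 s, s.2)).
pose s n := iter n f (x0, y0, y0').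
pose xs n := (s n).1.1.
pose ys n := (s n).1.2.
have sS n : s n.+1 = f (s n) by rewrite /s iterS.
have ysS n : ys n.+1 = (s n).2 by rewrite /ys sS.
have xsS n : xs n.+1 = h1 (s n) by rewrite /xs sS.
pose Inv n := [/\ G (xs n) (- ys n), F' (xs n) (s n).2,
  `|ys n - (s n).2| <= th ^+ n * K,
  (1 - th) * `|x0 - xs n| <= mu' * K * (1 - th ^+ n) &
  (1 - th) * `|y0 - ys n| <= K * (1 - th ^+ n)].
have step n : Inv n -> Inv n.+1 /\
    (`|xs n - xs n.+1| <= mu' * K * th ^+ n /\
     `|ys n - ys n.+1| <= K * th ^+ n).
  case=> GI FI AI BI CI.
  set x := xs n in GI FI BI *; set y := ys n in GI AI CI *;
  set y' := (s n).2 in FI AI *.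
  have t0 : 0 <= th ^+ n by apply: exprn_ge0; apply: ltW.
  have t1 : th ^+ n <= 1 by apply: exprn_ile1; [apply: ltW | apply: ltW].
  have px : `|xb - x| < rho.
    rewrite -(ltr_pM2l c0); apply: (le_lt_trans (scaled_tri x0 (ltW c0))).
    have : mu' * K * th ^+ n >= 0 by apply: mulr_ge0 => //; apply: mulr_ge0 => //; apply: ltW.
    nra.
  have py : `|yb - y'| < rho.
    rewrite -(ltr_pM2l c0); apply: (le_lt_trans (scaled_tri y0 (ltW c0))).
    apply: (le_lt_trans (lerD (lexx _) (scaled_tri y (ltW c0)))).
    have : th * th ^+ n * K >= 0 by apply: mulr_ge0 => //; apply: mulr_ge0 => //; apply: ltW.
    have : (1 - th) * `|y - y'| <= (1 - th) * (th ^+ n * K) by apply: ler_wpM2l => //; apply: ltW.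
    nra.
  have py2 : `|- yb - - y'| < rho by rewrite -opprD normrN.
  have [G1 X1] := Hh1 (s n) (conj px (conj py2 GI)).
  rewrite -/x -/y -/y' -/(xs n.+1) -(xsS n) in G1 X1.
  set x1 := xs n.+1 in G1 X1 *.
  have X1' : `|x - x1| <= mu' * K * th ^+ n.
    apply: (le_trans X1); rewrite -mulrA; apply: ler_wpM2l; first exact: ltW.
    by rewrite mulrC.
  have B1 : (1 - th) * `|x0 - x1| <= mu' * K * (1 - th ^+ n.+1).
    apply: (le_trans (scaled_tri x (ltW c0))); rewrite exprS.
    have : (1 - th) * `|x - x1| <= (1 - th) * (mu' * K * th ^+ n) by apply: ler_wpM2l => //; apply: ltW.
    nra.
  have px1 : `|xb - x1| < rho.
    rewrite -(ltr_pM2l c0); apply: (le_lt_trans (scaled_tri x0 (ltW c0))).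
    have t1' : th ^+ n.+1 >= 0 by apply: exprn_ge0; apply: ltW.
    have : mu' * K * th ^+ n.+1 >= 0 by apply: mulr_ge0 => //; apply: mulr_ge0 => //; apply: ltW.
    nra.
  have [F1 Y1] := Hh2 (x, x1, y') (conj px (conj px1 (conj FI py))).
  have e2 : (s n.+1).2 = h2 (x, x1, y') by rewrite sS.
  rewrite /= -e2 in F1 Y1.
  split; last first.
    split => //; rewrite ysS -/y' mulrC; exact: AI.
  split.
  - by rewrite ysS.
  - by [].
  - rewrite ysS -/y'; apply: (le_trans Y1).
    apply: (le_trans (ler_wpM2l (ltW Hlam0) X1')).
    rewrite le_eqVlt; apply/orP; left; apply/eqP; rewrite exprS /th; ring.
  - exact: B1.
  - rewrite ysS -/y'; apply: (le_trans (scaled_tri y (ltW c0))).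
    have : (1 - th) * `|y - y'| <= (1 - th) * (th ^+ n * K) by apply: ler_wpM2l => //; apply: ltW.
    rewrite exprS; nra.
have inv n : Inv n.
  elim: n => [|n IH]; last by case: (step n IH).
  split => //=; rewrite ?subrr ?normr0 ?expr0 ?mul1r ?mulr0 //.
have sx n : `|xs n - xs n.+1| <= mu' * K * th ^+ n by case: (step n (inv n)) => _ [].
have sy n : `|ys n - ys n.+1| <= K * th ^+ n by case: (step n (inv n)) => _ [].
have th1 : th < 1 by [].
have cx : cvgn xs.
  apply: (geo_cvg xs (mu' * K) th) => //; last exact: ltW.
  by apply: mulr_ge0 => //; apply: ltW.
have cy : cvgn ys by apply: (geo_cvg ys K th) => //; apply: ltW.
exists (limn xs), (limn ys); split.
- suff : [set xy : X * Y | F' xy.1 xy.2] (limn xs, limn ys) by [].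
  apply: (@closed_cvg nat _ \oo _ (fun n : nat => (xs n, ys n.+1))
    [set xy : X * Y | F' xy.1 xy.2] HcF _ (limn xs, limn ys)).
    by apply: nearW => n; rewrite /= ysS; case: (inv n).
  apply: cvg_pair => //; by rewrite (cvg_shiftS ys).
- suff : [set xy : X * Y | G xy.1 xy.2] (limn xs, - limn ys) by [].
  apply: (@closed_cvg nat _ \oo _ (fun n : nat => (xs n, - ys n))
    [set xy : X * Y | G xy.1 xy.2] HcG _ (limn xs, - limn ys)).
    by apply: nearW => n; case: (inv n).
  apply: cvg_pair => //; exact: cvgN.
- suff : [set r : R | r <= mu' * K] ((1 - th) * `|x0 - limn xs|) by [].
  apply: (@closed_cvg nat _ \oo _ (fun n : nat => (1 - th) * `|x0 - xs n|)
    [set r : R | r <= mu' * K] (@closed_le R (mu' * K)) _ ((1 - th) * `|x0 - limn xs|)).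
    apply: nearW => n; case: (inv n) => _ _ _ B _.
    apply: (le_trans B).
    have : th ^+ n >= 0 by apply: exprn_ge0; apply: ltW.
    have : mu' * K >= 0 by apply: mulr_ge0 => //; apply: ltW.
    nra.
  apply: cvgMl_tmp; apply: cvg_norm; apply: cvgB => //; exact: cvg_cst.
Qed.
End Iter.


Section Main.
Context {R : realType} {X P Y : completeNormedModType R}.
Variables (F : X -> P -> set Y) (G : X -> set Y) (xb : X) (pb : P) (yb : Y).

Lemma near_norm {V : normedModType R} {x : V} {Q : V -> Prop} :
  nbhs x Q -> exists2 e, 0 < e & forall y, `|x - y| < e -> Q y.
Proof.
move/nbhs_ballP => [e /= e0 he]; exists e => // y hy; apply: he.
by rewrite -ball_normE.
Qed.

Lemma nbhs_lt {V : normedModType R} (x : V) (e : R) : 0 < e ->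
  nbhs x [set y | `|x - y| < e].
Proof.
move=> e0; apply/nbhs_ballP; exists e => // y /=; by rewrite -ball_normE.
Qed.

Lemma min_pos {a b : R} : 0 < a -> 0 < b -> exists2 c, 0 < c & c <= a /\ c <= b.
Proof.
move=> a0 b0; exists (Num.min a b); first by rewrite lt_min a0 b0.
by rewrite !ge_min !lexx ?orbT.
Qed.

Lemma core (lam kap mu mu' : R) : 0 < lam -> 0 < kap -> 0 < mu -> mu < mu' ->
  lam * mu' < 1 ->
  (exists U V W, [/\ nbhs xb U, nbhs pb V, nbhs yb W &
      forall x u p, U x -> U u -> V p -> forall y, F x p y -> W y ->
        exists2 y', F u p y' & `|y - y'| <= lam * `|x - u|]) ->
  (exists U V W, [/\ nbhs xb U, nbhs pb V, nbhs yb W &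
      forall x p q, U x -> V p -> V q -> forall y, F x p y -> W y ->
        exists2 y', F x q y' & `|y - y'| <= kap * `|p - q|]) ->
  metric_regular G xb (- yb) mu ->
  locally_sum_stable F G xb pb yb (- yb) ->
  (\forall p \near pb, closed [set xy : X * Y | F xy.1 p xy.2]) ->
  closed [set xy : X * Y | G xy.1 xy.2] ->
  lipschitz_like (fun p q : P => `|p - q|) (solution_map F G) pb xb
    (mu' * kap / (1 - lam * mu')).
Proof.
move=> lam0 kap0 mu0 mumu' th1 [U1 [V1 [W1 [hU1 hV1 hW1 HX]]]]
  [U2 [V2 [W2 [hU2 hV2 hW2 HP]]]] [U3 [V3 [hU3 [hV3 HM]]]] Hss Hcl HcG.
have [ex ex0 hex] := near_norm (filterI hU1 (filterI hU2 hU3)).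
have [ep ep0 hep] := near_norm (filterI hV1 (filterI hV2 Hcl)).
have [ey ey0 hey] := near_norm (filterI hW1 hW2).
have [e3 e30 he3] := near_norm hV3.
have [r1 r10 [r1x r1y]] := min_pos ex0 ey0.
have [rho rho0 [rhor1 rhoe3]] := min_pos r10 e30.
have rx : rho <= ex by apply: le_trans r1x.
have ry : rho <= ey by apply: le_trans r1y.
set th := lam * mu' in th1 *.
have mu'0 : 0 < mu' by apply: lt_trans mumu'.
have th0 : 0 < th by apply: mulr_gt0.
have c0 : 0 < 1 - th by rewrite subr_gt0.
have [d0 d00 Hd0] := Hss (rho / 2) (divr_gt0 rho0 (ltr0Sn _ 1)).
set D := (1 - th) + 2 * mu' * kap + 2 * kap.
have D0 : 0 < D by rewrite /D; nra.
set d3 := (1 - th) * rho / (2 * D).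
have d30 : 0 < d3 by rewrite /d3; apply: divr_gt0; [apply: mulr_gt0|nra].
have d3D : d3 * D = (1 - th) * rho / 2.
  by rewrite /d3; field; rewrite gt_eqF.
have [d1 d10 [d1d0 d1d3]] := min_pos d00 d30.
have [d d0' [dd1 dep]] := min_pos d10 ep0.
have dd3 : d <= d3 by apply: le_trans d1d3.
have dd0 : d <= d0 by apply: le_trans d1d0.
exists [set q | `|pb - q| < d], [set x | `|xb - x| < d]; split.
  exact: nbhs_lt.
split; first exact: nbhs_lt.
move=> p q /= hp hq x [y [z [Fxy Gxz yz0]]] hx.
have hp' : ball pb d0 p by rewrite -ball_normE /=; apply: lt_le_trans hp _.
have hx' : ball xb d0 x by rewrite -ball_normE /=; apply: lt_le_trans hx _.
have w0 : [set y + z | y in F x p & z in G x] 0 by exists y => //; exists z.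
have b0 : ball (yb + - yb) d0 0 by rewrite subrr; apply: ballxx.
have [y0 [z0 [Fy0 by0 Gz0 bz0 e0]]] := Hd0 x p hx' hp' 0 w0 b0.
move: by0; rewrite -ball_normE /= => by0.
have ez : z0 = - y0 by apply: (addrI y0); rewrite -e0 subrr.
rewrite ez in Gz0.
have dr : d <= rho / 2.
  have : d * D <= d3 * D by rewrite ler_pM2r.
  have hm : 0 <= d * (2 * mu' * kap + 2 * kap).
    by apply: mulr_ge0; [apply: ltW | nra].
  rewrite d3D /D => h; nra.
have hxex : `|xb - x| < ex by apply: (lt_le_trans hx); apply: le_trans rx; nra.
have [hU1x [hU2x hU3x]] := hex x hxex.
have hpep : `|pb - p| < ep by apply: lt_le_trans dep.
have hqep : `|pb - q| < ep by apply: lt_le_trans dep.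
have [hV1p [hV2p hclp]] := hep p hpep.
have [hV1q [hV2q hclq]] := hep q hqep.
have hyey : `|yb - y0| < ey by apply: (lt_le_trans by0); apply: le_trans ry; nra.
have [hW1y hW2y] := hey y0 hyey.
have [y0' Fy0' hy0'] := HP x p q hU2x hV2p hV2q y0 Fy0 hW2y.
have HL : forall x u, `|xb - x| < rho -> `|xb - u| < rho ->
    forall y, F x q y -> `|yb - y| < rho ->
    exists2 y', F u q y' & `|y - y'| <= lam * `|x - u|.
  move=> a u ha hu yy Fyy hyy.
  have [ha1 _] := hex a (lt_le_trans ha rx).
  have [hu1 _] := hex u (lt_le_trans hu rx).
  have [hyy1 _] := hey yy (lt_le_trans hyy ry).
  exact: HX.
have HM' : forall a b, `|xb - a| < rho -> `|- yb - b| < rho ->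
    (dist a [set a' | G a' b] <= mu%:E * dist b (G a))%E.
  move=> a b ha hb.
  have [_ [_ ha3]] := hex a (lt_le_trans ha rx).
  exact: HM (he3 b (lt_le_trans hb rhoe3)).
have hpq : `|p - q| < 2 * d.
  apply: (le_lt_trans (ler_distD pb p q)); rewrite distrC.
  lra.
have K1 : `|y0 - y0'| <= 2 * kap * d.
  apply: (le_trans hy0'); nra.
have Kge : 0 <= `|y0 - y0'| by [].
have xge : 0 <= `|xb - x| by [].
have hdD : d * D <= (1 - th) * rho / 2 by rewrite -d3D ler_pM2r.
have I1 : (1 - th) * `|xb - x| + mu' * `|y0 - y0'| < (1 - th) * rho.
  move: hdD; rewrite /D => h; nra.
have I2 : (1 - th) * `|yb - y0| + `|y0 - y0'| < (1 - th) * rho.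
  move: hdD; rewrite /D => h; nra.
have [xs [ys [Fs Gs Bs]]] := iter_sol (fun x => F x q) G xb yb rho lam mu mu'
  lam0 (ltW mu0) mumu' th1 HL HM' hclq HcG x y0 y0' Gz0 Fy0' I1 I2.
exists xs; first by exists ys, (- ys); split => //; rewrite subrr.
rewrite -/th in Bs.
rewrite mulrAC ler_pdivlMr //; rewrite mulrC.
apply: (le_trans Bs); rewrite -mulrA; apply: ler_wpM2l; first exact: ltW.
by apply: (le_trans hy0'); rewrite mulrC.
Qed.
End Main.


Section Fin.
Context {R : realType}.

Lemma inf_fin {S : set R} {L0} : S L0 -> (forall L, S L -> 0 < L) ->
  exists2 a, ereal_inf [set L%:E | L in S] = a%:E & 0 <= a.
Proof.
move=> SL0 Spos.
have up : (ereal_inf [set L%:E | L in S] <= L0%:E)%E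
  by apply: ereal_inf_lbound; exists L0.
have lo : (0%:E <= ereal_inf [set L%:E | L in S])%E.
  apply: le_ereal_inf_tmp => _ [L SL <-]; rewrite lee_fin; exact/ltW/Spos.
move: up lo; case: (ereal_inf _) => [a| |] //= _; rewrite lee_fin => a0.
by exists a.
Qed.

Lemma inf_approx {S : set R} {a eta} : ereal_inf [set L%:E | L in S] = a%:E ->
  0 < eta -> exists2 L, S L & L < a + eta.
Proof.
move=> E e0.
have : (ereal_inf [set L%:E | L in S] < (a + eta)%:E)%E
  by rewrite E lte_fin ltrDl.
move/ereal_inf_lt => [_ [L SL <-]]; rewrite lte_fin => h; by exists L.
Qed.

Lemma inf_ge0 {S : set R} {a} : ereal_inf [set L%:E | L in S] = a%:E ->
  (forall L, S L -> 0 < L) -> 0 <= a.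
Proof.
move=> E Spos; rewrite -lee_fin -E.
apply: le_ereal_inf_tmp => _ [L SL <-]; rewrite lee_fin; exact/ltW/Spos.
Qed.

Lemma ll_mono {A : topologicalType} {B : normedModType R} (dA : A -> A -> R)
  (T : A -> set B) a0 b0 c t : (forall a u, 0 <= dA a u) -> c <= t ->
  lipschitz_like dA T a0 b0 c -> lipschitz_like dA T a0 b0 t.
Proof.
move=> d0 ct [U [V [hU [hV H]]]]; exists U, V; split => //; split => //.
move=> a u Ua Uu b Tab Vb; have [b' Tb' hb'] := H a u Ua Uu b Tab Vb.
exists b' => //; apply: (le_trans hb'); apply: ler_wpM2r => //.
Qed.

Lemma eta_choice {a b r t : R} : 0 <= a -> 0 <= b -> 0 <= r -> a * r < 1 ->
  r * b / (1 - a * r) < t -> exists2 eta, 0 < eta &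
  (a + eta) * (r + eta) < 1 /\
  (r + eta) * (b + eta) < t * (1 - (a + eta) * (r + eta)).
Proof.
move=> a0 b0 r0 ar1 ht.
set D := 1 - a * r.
have D0 : 0 < D by rewrite /D subr_gt0.
have ht' : r * b < t * D by rewrite -ltr_pdivrMr.
have t0 : 0 < t by apply: le_lt_trans ht; apply: divr_ge0; [nra | apply: ltW].
set g := t * D - r * b.
have g0 : 0 < g by rewrite /g subr_gt0.
set M := r + b + 1 + t * (a + r + 1).
have M0 : 0 < M by rewrite /M; nra.
set N := a + r + 1.
have N0 : 0 < N by rewrite /N; nra.
have e1 : 0 < g / (2 * M) by apply: divr_gt0 => //; nra.
have e2 : 0 < D / (2 * N) by apply: divr_gt0 => //; nra.
have e1M : g / (2 * M) * M = g / 2 by field; rewrite gt_eqF.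
have e2N : D / (2 * N) * N = D / 2 by field; rewrite gt_eqF.
have [eta1 eta10 [h1 h2]] := min_pos e1 e2.
have [eta eta0 [h3 h4]] := min_pos eta10 (ltr01 : (0 : R) < 1).
exists eta => //.
have hM : eta * M <= g / 2.
  rewrite -e1M; apply: ler_wpM2r; [exact: ltW | exact: le_trans h1].
have hN : eta * N <= D / 2.
  rewrite -e2N; apply: ler_wpM2r; [exact: ltW | exact: le_trans h2].
have ee : eta * eta <= eta by nra.
have tee : t * (eta * eta) <= t * eta by apply: ler_wpM2l => //; exact: ltW.
move: hM hN g0 D0; rewrite /M /N /g /D => hM hN g0 D0.
split; first nra.
have E1 : (a + eta) * (r + eta) = a * r + eta * (a + r) + eta * eta by ring.
have E2 : (r + eta) * (b + eta) = r * b + eta * (r + b) + eta * eta by ring.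
rewrite E1 E2; nra.
Qed.
End Fin.


Section Main2.
Context {R : realType} {X P Y : completeNormedModType R}.
Variables (F : X -> P -> set Y) (G : X -> set Y) (xb : X) (pb : P) (yb : Y).

Lemma joint_hat L :
  lipschitz_like (@sum_dist R X P) (fun xp : X * P => F xp.1 xp.2) (xb, pb) yb L ->
  (exists U V W, [/\ nbhs xb U, nbhs pb V, nbhs yb W &
      forall x u p, U x -> U u -> V p -> forall y, F x p y -> W y ->
        exists2 y', F u p y' & `|y - y'| <= L * `|x - u|]) /\
  (exists U V W, [/\ nbhs xb U, nbhs pb V, nbhs yb W &
      forall x p q, U x -> V p -> V q -> forall y, F x p y -> W y ->
        exists2 y', F x q y' & `|y - y'| <= L * `|p - q|]).
Proof.
move=> [U [W [hU [hW H]]]].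
have [[A B] /= [hA hB] hAB] := hU.
split.
  exists A, B, W; split => // x u p Ax Au Bp y Fy Wy.
  have [y' Fy' h] := H (x, p) (u, p) (hAB (x, p) (conj Ax Bp))
    (hAB (u, p) (conj Au Bp)) y Fy Wy.
  by exists y' => //; move: h; rewrite /sum_dist /= subrr normr0 addr0.
exists A, B, W; split => // x p q Ax Bp Bq y Fy Wy.
have [y' Fy' h] := H (x, p) (x, q) (hAB (x, p) (conj Ax Bp))
  (hAB (x, q) (conj Ax Bq)) y Fy Wy.
by exists y' => //; move: h; rewrite /sum_dist /= subrr normr0 add0r.
Qed.

Lemma stepC (r a b : R) :
  reg G xb (- yb) = r%:E -> lip_hat_x F xb pb yb = a%:E ->
  lip_hat_p F xb pb yb = b%:E -> a * r < 1 ->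
  locally_sum_stable F G xb pb yb (- yb) ->
  (\forall p \near pb, closed [set xy : X * Y | F xy.1 p xy.2]) ->
  closed [set xy : X * Y | G xy.1 xy.2] ->
  forall t, r * b / (1 - a * r) < t ->
  lipschitz_like (fun p q : P => `|p - q|) (solution_map F G) pb xb t.
Proof.
move=> Hr Ha Hb ar Hss Hcl HcG t ht.
have a0 := inf_ge0 Ha (fun L h => h.1).
have b0 := inf_ge0 Hb (fun L h => h.1).
have r0 := inf_ge0 Hr (fun L h => h.1).
have [eta eta0 [h1 h2]] := eta_choice a0 b0 r0 ar ht.
have [lam [lam0 HXl] lamlt] := inf_approx Ha eta0.
have [kap [kap0 HPk] kaplt] := inf_approx Hb eta0.
have [mu [mu0 HMm] mult] := inf_approx Hr eta0.
set mu' := r + eta.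
have mu'0 : 0 < mu' by rewrite /mu'; lra.
have th : lam * mu' < 1.
  apply: le_lt_trans h1; rewrite -/mu'; apply: ler_wpM2r; [exact: ltW|exact: ltW].
have HC := core F G xb pb yb lam kap mu mu' lam0 kap0 mu0 mult th HXl HPk HMm Hss Hcl HcG.
apply: (ll_mono _ _ _ _ _ _ _ _ HC).
  by move=> ? ?.
rewrite ler_pdivrMr; last by rewrite subr_gt0.
have t0 : 0 < t.
  apply: le_lt_trans ht; apply: divr_ge0; [nra | rewrite subr_ge0; exact: ltW].
have : lam * mu' <= (a + eta) * mu' by apply: ler_wpM2r; [exact: ltW|exact: ltW].
have : mu' * kap <= mu' * (b + eta) by apply: ler_wpM2l; [exact: ltW|exact: ltW].
move: h2; rewrite -/mu' => h2 hk hl.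
have : t * (lam * mu') <= t * ((a + eta) * mu') by apply: ler_wpM2l => //; exact: ltW.
nra.
Qed.
End Main2.


Theorem theorem4p13 (R : realType) (X P Y : completeNormedModType R)
  (F : X -> P -> set Y) (G : X -> set Y) (xb : X) (pb : P) (yb : Y) :
  F xb pb yb -> G xb (- yb) ->
  locally_sum_stable F G xb pb yb (- yb) ->
  (\forall p \near pb, closed [set xy : X * Y | F xy.1 p xy.2]) ->
  closed [set xy : X * Y | G xy.1 xy.2] ->
  (exists2 L, 0 < L &
     lipschitz_like (@sum_dist R X P) (fun xp : X * P => F xp.1 xp.2)
       (xb, pb) yb L) ->
  (exists2 L, 0 < L & metric_regular G xb (- yb) L) ->
  inner_semicontinuous G xb (- yb) ->
  (lip_hat_x F xb pb yb * reg G xb (- yb)%R < 1)%E ->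
  (exists2 L, 0 < L &
     lipschitz_like (fun p q : P => `|p - q|) (solution_map F G) pb xb L) /\
  (forall r a b : R,
     reg G xb (- yb) = r%:E -> lip_hat_x F xb pb yb = a%:E ->
     lip_hat_p F xb pb yb = b%:E ->
     (lip (fun p q : P => `|p - q|%R) (solution_map F G) pb xb
        <= ((r * b) / (1 - a * r))%R%:E)%E).
Proof.
move=> _ _ Hss Hcl HcG [L L0 HL] [Lg Lg0 HG] _ Hlt.
have [HXL HPL] := @joint_hat _ _ _ _ F xb pb yb L HL.
have [a Ha a0] : exists2 a, lip_hat_x F xb pb yb = a%:E & 0 <= a := inf_fin (S := [set L | 0 < L /\ _]) (conj L0 HXL) (fun L h => h.1).
have [b Hb b0] : exists2 b, lip_hat_p F xb pb yb = b%:E & 0 <= b := inf_fin (S := [set L | 0 < L /\ _]) (conj L0 HPL) (fun L h => h.1).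
have [r Hr r0] : exists2 r, reg G xb (- yb) = r%:E & 0 <= r := inf_fin (S := [set L | 0 < L /\ _]) (conj Lg0 HG) (fun L h => h.1).
have bnd0 : forall r a b : R, 0 <= r -> 0 <= b -> a * r < 1 ->
    0 <= r * b / (1 - a * r).
  move=> r1 a1 b1 h1 h2 h3; apply: divr_ge0; first exact: mulr_ge0.
  by rewrite subr_ge0; exact: ltW.
split.
  have ar : a * r < 1 by move: Hlt; rewrite Ha Hr -EFinM lte_fin.
  exists (r * b / (1 - a * r) + 1).
    by have := bnd0 r a b r0 b0 ar; lra.
  apply: (stepC F G xb pb yb r a b Hr Ha Hb ar Hss Hcl HcG); lra.
move=> r' a' b' Hr' Ha' Hb'.
have ar : a' * r' < 1 by move: Hlt; rewrite Ha' Hr' -EFinM lte_fin.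
have r'0 := inf_ge0 Hr' (fun L h => h.1).
have b'0 := inf_ge0 Hb' (fun L h => h.1).
have B0 := bnd0 r' a' b' r'0 b'0 ar.
apply/lee_addgt0Pr => e e0; rewrite -EFinD.
apply: ereal_inf_lbound; exists (r' * b' / (1 - a' * r') + e) => //.
split; first lra.
apply: (stepC F G xb pb yb r' a' b' Hr' Ha' Hb' ar Hss Hcl HcG); lra.
Qed.
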